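(* Let $(\mathcal{A},\succ,\prec)$ be a finite-dimensional antidendriform algebra with associated antiassociative algebra $(\mathcal{A},\ast)$. Then $(\mathcal{A}\ltimes_{R^*_\prec,L^*_\succ}\mathcal{A}^*,\omega)$, where $\mathcal{A}^*$ carries the zero product, is a double construction of symplectic antiassociative algebra. Conversely, let $(T(\mathcal{A})=\mathcal{A}\oplus\mathcal{A}^*,\ast,\omega)$ be a double construction of symplectic antiassociative algebra such that $\mathcal{A}^*$ is an ideal of $T(\mathcal{A})$. Then the product of $\mathcal{A}^*$ is zero, and $(T(\mathcal{A}),\omega)$ is isomorphic (as double constructions of symplectic antiassociative algebras) to $(\mathcal{A}\ltimes_{R^*_\prec,L^*_\succ}\mathcal{A}^*,\omega)$, where $(\succ,\prec)$ is the antidendriform structure on $\mathcal{A}$ obtained by restricting the one defined on $T(\mathcal{A})$ by $\omega(u\succ v,w)=\omega(v,w\ast u)$, $\omega(u\prec v,w)=\omega(u,v\ast w)$.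
   Context: An antiassociative algebra is a vector space with bilinear product satisfying $(x\ast y)\ast z=-x\ast(y\ast z)$. An antidendriform algebra is a vector space with bilinear products $\prec,\succ$ such that, with $x\ast y=x\prec y+x\succ y$: $(x\prec y)\prec z=-x\prec(y\ast z)$, $(x\succ y)\prec z=-x\succ(y\prec z)$, $x\succ(y\succ z)=-(x\ast y)\succ z$. $R^*_\prec,L^*_\succ:\mathcal{A}\to gl(\mathcal{A}^* )$ are given by $\langle R^*_\prec(x)a^*,y\rangle=\langle y\prec x,a^*\rangle$, $\langle L^*_\succ(x)a^*,y\rangle=\langle x\succ y,a^*\rangle$. $\mathcal{A}\ltimes_{R^*_\prec,L^*_\succ}\mathcal{A}^*$ is $\mathcal{A}\oplus\mathcal{A}^*$ with product $(x+a^* )\ast(y+b^* )=x\ast y+R^*_\prec(x)b^*+L^*_\succ(y)a^*$. A double construction of symplectic antiassociative algebra associated to antiassociative algebras $\mathcal{A}$ and $\mathcal{A}^*$ is an antiassociative product on $\mathcal{A}\oplus\mathcal{A}^*$ with $\mathcal{A},\mathcal{A}^*$ subalgebras and $\omega(x+a^*,y+b^* )=-\langle x,b^*\rangle+\langle a^*,y\rangle$ satisfying $\omega(u\ast v,w)+\omega(v\ast w,u)+\omega(w\ast u,v)=0$. Two such are isomorphic if there is an antiassociative algebra isomorphism $\varphi$ between them mapping $\mathcal{A}_1$ onto $\mathcal{A}_2$, $\mathcal{A}_1^*$ onto $\mathcal{A}_2^*$, with $\omega_1(u,v)=\omega_2(\varphi(u),\varphi(v))$. *)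

(* Defs.v *)
From HB Require Import structures.
From mathcomp Require Import all_boot all_order all_algebra.
Set Implicit Arguments. Unset Strict Implicit. Unset Printing Implicit Defensive.
Import GRing.Theory.
Local Open Scope ring_scope.

(* The n-dimensional space A is modelled as 'rV[K]_n; its dual Adual is also
   modelled as 'rV[K]_n, with the canonical pairing <x, a> = sum_i x_i a_i. *)

Section Defs.
Variables (K : fieldType) (n : nat).

Definition vec := 'rV[K]_n.
Definition dbl := (vec * vec)%type.

Definition pairing (x a : vec) : K := \sum_(i < n) x 0 i * a 0 i.

Definition inA (x : vec) : dbl := (x, 0).
Definition inAd (a : vec) : dbl := (0, a).

Definition dadd (u v : dbl) : dbl := (u.1 + v.1, u.2 + v.2).
Definition dscale (k : K) (u : dbl) : dbl := (k *: u.1, k *: u.2).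
Definition dopp (u : dbl) : dbl := (- u.1, - u.2).

Definition symp (u v : dbl) : K := - pairing u.1 v.2 + pairing v.1 u.2.

Definition bilinear_vec (p : vec -> vec -> vec) : Prop :=
  forall (k : K) (x y z : vec),
    p (k *: x + y) z = k *: p x z + p y z /\
    p z (k *: x + y) = k *: p z x + p z y.

Definition bilinear_dbl (p : dbl -> dbl -> dbl) : Prop :=
  forall (k : K) (u v w : dbl),
    p (dadd (dscale k u) v) w = dadd (dscale k (p u w)) (p v w) /\
    p w (dadd (dscale k u) v) = dadd (dscale k (p w u)) (p w v).

Definition antiassociative_dbl (p : dbl -> dbl -> dbl) : Prop :=
  forall u v w : dbl, p (p u v) w = dopp (p u (p v w)).

Definition antidendriform (prec succ : vec -> vec -> vec) : Prop :=
  bilinear_vec prec /\ bilinear_vec succ /\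
  let ast := fun x y => prec x y + succ x y in
  (forall x y z, prec (prec x y) z = - prec x (ast y z)) /\
  (forall x y z, prec (succ x y) z = - succ x (prec y z)) /\
  (forall x y z, succ x (succ y z) = - succ (ast x y) z).

Definition ev (i : 'I_n) : vec := delta_mx 0 i.

(* <R^dual_prec(x) a, y> = <y prec x, a> *)
Definition Rstar (prec : vec -> vec -> vec) (x a : vec) : vec :=
  \row_(i < n) pairing (prec (ev i) x) a.
(* <L^dual_succ(x) a, y> = <x succ y, a> *)
Definition Lstar (succ : vec -> vec -> vec) (x a : vec) : vec :=
  \row_(i < n) pairing (succ x (ev i)) a.

Definition sdprod (prec succ : vec -> vec -> vec) (u v : dbl) : dbl :=
  (prec u.1 v.1 + succ u.1 v.1, Rstar prec u.1 v.2 + Lstar succ v.1 u.2).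

Definition double_construction (p : dbl -> dbl -> dbl) : Prop :=
  [/\ bilinear_dbl p, antiassociative_dbl p,
      (forall x y : vec, (p (inA x) (inA y)).2 = 0),
      (forall a b : vec, (p (inAd a) (inAd b)).1 = 0) &
      (forall u v w : dbl,
         symp (p u v) w + symp (p v w) u + symp (p w u) v = 0)].

Definition dual_is_ideal (p : dbl -> dbl -> dbl) : Prop :=
  forall (u : dbl) (a : vec), (p u (inAd a)).1 = 0 /\ (p (inAd a) u).1 = 0.

Definition dc_isomorphism (p1 p2 : dbl -> dbl -> dbl) (phi : dbl -> dbl) : Prop :=
  [/\ ((forall k u v, phi (dadd (dscale k u) v) = dadd (dscale k (phi u)) (phi v))
       /\ bijective phi),
      (forall u v, phi (p1 u v) = p2 (phi u) (phi v)),
      ((forall x, exists y, phi (inA x) = inA y) /\ (forall y, exists x, phi (inA x) = inA y)),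
      ((forall a, exists b, phi (inAd a) = inAd b) /\ (forall b, exists a, phi (inAd a) = inAd b)) &
      (forall u v, symp u v = symp (phi u) (phi v))].

End Defs.

(* Main.v *)
From HB Require Import structures.
From mathcomp Require Import all_boot all_order all_algebra.
From mathcomp Require Import ring.
Require Import Defs.
Set Implicit Arguments. Unset Strict Implicit. Unset Printing Implicit Defensive.
Import GRing.Theory.
Local Open Scope ring_scope.

Section Aux.
Variables (K : fieldType) (n : nat).
Implicit Types (x y z t a b c : vec K n).

Lemma pairingDl x y a : pairing (x + y) a = pairing x a + pairing y a.
Proof. by rewrite /pairing -big_split; apply: eq_bigr => i _; rewrite mxE mulrDl. Qed.
Lemma pairingDr x a b : pairing x (a + b) = pairing x a + pairing x b.
Proof. by rewrite /pairing -big_split; apply: eq_bigr => i _; rewrite mxE mulrDr. Qed.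
Lemma pairingZl k x a : pairing (k *: x) a = k * pairing x a.
Proof. by rewrite /pairing mulr_sumr; apply: eq_bigr => i _; rewrite mxE mulrA. Qed.
Lemma pairingZr k x a : pairing x (k *: a) = k * pairing x a.
Proof. by rewrite /pairing mulr_sumr; apply: eq_bigr => i _; rewrite mxE mulrCA. Qed.
Lemma pairingNl x a : pairing (- x) a = - pairing x a.
Proof. by rewrite /pairing -sumrN; apply: eq_bigr => i _; rewrite mxE mulNr. Qed.
Lemma pairingNr x a : pairing x (- a) = - pairing x a.
Proof. by rewrite /pairing -sumrN; apply: eq_bigr => i _; rewrite mxE mulrN. Qed.
Lemma pairing0l a : pairing 0 a = 0.
Proof. by rewrite /pairing big1 // => i _; rewrite mxE mul0r. Qed.
Lemma pairing0r x : pairing x 0 = 0.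
Proof. by rewrite /pairing big1 // => i _; rewrite mxE mulr0. Qed.
Lemma pairingC x a : pairing x a = pairing a x.
Proof. by rewrite /pairing; apply: eq_bigr => i _; rewrite mulrC. Qed.

Lemma pairing_evr x i : pairing x (ev K i) = x 0 i.
Proof.
rewrite /pairing (bigD1 i) //= big1 => [|j Hj]; rewrite /ev mxE.
  by rewrite !eqxx mulr1 addr0.
by rewrite (negbTE Hj) andbF mulr0.
Qed.

Lemma row_ext x y : (forall c, pairing x c = pairing y c) -> x = y.
Proof. by move=> H; apply/rowP => j; rewrite -!pairing_evr. Qed.
Lemma row_ext_l a b : (forall t, pairing t a = pairing t b) -> a = b.
Proof. by move=> H; apply: row_ext => c; rewrite pairingC H pairingC. Qed.

Lemma lin_expand (f : vec K n -> K) :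
  (forall k a b, f (k *: a + b) = k * f a + f b) ->
  forall c, f c = pairing c (\row_i f (ev K i)).
Proof.
move=> Hf.
have f0 : f 0 = 0.
  have := Hf 1 0 0; rewrite scale1r addr0 mul1r => H.
  by apply: (@addrI _ (f 0)); rewrite addr0 -H.
have fD : forall a b, f (a + b) = f a + f b.
  by move=> a b; rewrite -[a]scale1r Hf mul1r scale1r.
have fZ : forall k a, f (k *: a) = k * f a.
  by move=> k a; rewrite -[k *: a]addr0 Hf f0 addr0.
move=> c; rewrite {1}(row_sum_delta c) (big_morph f fD f0) /pairing.
by apply: eq_bigr => i _; rewrite fZ mxE.
Qed.

Section BL.
Variable pr : vec K n -> vec K n -> vec K n.
Hypothesis hp : bilinear_vec pr.

Lemma bl0l z : pr 0 z = 0.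
Proof.
have := (hp 1 0 0 z).1; rewrite !scale1r addr0 => H.
by apply: (@addrI _ (pr 0 z)); rewrite addr0 -H.
Qed.
Lemma bl0r z : pr z 0 = 0.
Proof.
have := (hp 1 0 0 z).2; rewrite !scale1r addr0 => H.
by apply: (@addrI _ (pr z 0)); rewrite addr0 -H.
Qed.
Lemma blDl x y z : pr (x + y) z = pr x z + pr y z.
Proof. by have := (hp 1 x y z).1; rewrite !scale1r. Qed.
Lemma blDr x y z : pr z (x + y) = pr z x + pr z y.
Proof. by have := (hp 1 x y z).2; rewrite !scale1r. Qed.
Lemma blZl k x z : pr (k *: x) z = k *: pr x z.
Proof. by have := (hp k x 0 z).1; rewrite !addr0 bl0l addr0. Qed.
Lemma blZr k x z : pr z (k *: x) = k *: pr z x.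
Proof. by have := (hp k x 0 z).2; rewrite !addr0 bl0r addr0. Qed.
Lemma blNl x z : pr (- x) z = - pr x z.
Proof. by rewrite -scaleN1r blZl scaleN1r. Qed.
Lemma blNr x z : pr z (- x) = - pr z x.
Proof. by rewrite -scaleN1r blZr scaleN1r. Qed.

Lemma pairing_Rstar t x a : pairing t (Rstar pr x a) = pairing (pr t x) a.
Proof.
have := lin_expand (f := fun t => pairing (pr t x) a) _ t.
by move=> -> // k u v; rewrite blDl blZl pairingDl pairingZl.
Qed.
Lemma pairing_Lstar t x a : pairing t (Lstar pr x a) = pairing (pr x t) a.
Proof.
have := lin_expand (f := fun t => pairing (pr x t) a) _ t.
by move=> -> // k u v; rewrite blDr blZr pairingDl pairingZl.
Qed.
Lemma Rstar0l a : Rstar pr 0 a = 0.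
Proof. by apply/rowP => i; rewrite !mxE bl0r pairing0l. Qed.
Lemma Rstar0r x : Rstar pr x 0 = 0.
Proof. by apply/rowP => i; rewrite !mxE pairing0r. Qed.
Lemma Lstar0l a : Lstar pr 0 a = 0.
Proof. by apply/rowP => i; rewrite !mxE bl0l pairing0l. Qed.
Lemma Lstar0r x : Lstar pr x 0 = 0.
Proof. by apply/rowP => i; rewrite !mxE pairing0r. Qed.
End BL.
End Aux.

Section Forward.
Variables (K : fieldType) (n : nat).
Variables prec succ : vec K n -> vec K n -> vec K n.
Hypothesis hp : bilinear_vec prec.
Hypothesis hs : bilinear_vec succ.

Lemma forward :
  (forall x y z, prec (prec x y) z = - prec x (prec y z + succ y z)) ->
  (forall x y z, prec (succ x y) z = - succ x (prec y z)) ->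
  (forall x y z, succ x (succ y z) = - succ (prec x y + succ x y) z) ->
  double_construction (sdprod prec succ).
Proof.
move=> A1 A2 A3.
have A1' : forall t x y, prec t (prec x y + succ x y) = - prec (prec t x) y.
  by move=> t x y; rewrite A1 opprK.
have A3' : forall x y z, succ (prec x y + succ x y) z = - succ x (succ y z).
  by move=> x y z; rewrite A3 opprK.
split.
- move=> k u v w; split; rewrite /sdprod /dadd /dscale /=; congr pair.
  + by rewrite !(blDl hp) !(blZl hp) !(blDl hs) !(blZl hs) scalerDr addrACA.
  + apply: row_ext_l => t.
    rewrite !(pairingDr, pairingZr, pairing_Rstar hp, pairing_Lstar hs).
    rewrite !(blDr hp, blZr hp, pairingDl, pairingZl); ring.
  + by rewrite !(blDr hp) !(blZr hp) !(blDr hs) !(blZr hs) scalerDr addrACA.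
  + apply: row_ext_l => t.
    rewrite !(pairingDr, pairingZr, pairing_Rstar hp, pairing_Lstar hs).
    rewrite !(blDl hs, blZl hs, pairingDl, pairingZl); ring.
- move=> u v w; rewrite /sdprod /dopp /=; congr pair.
  + apply: row_ext => c.
    rewrite A3' (blDl hp) A1 A2 (blDr hs).
    rewrite !(pairingDl, pairingNl); ring.
  + apply: row_ext_l => t.
    rewrite !(pairingDr, pairing_Rstar hp, pairing_Lstar hs).
    rewrite A1' A2 A3 !pairingNl pairingNr.
    rewrite !(pairingDr, pairing_Rstar hp, pairing_Lstar hs); ring.
- by move=> x y /=; rewrite (Rstar0r prec) (Lstar0r succ) addr0.
- by move=> a b /=; rewrite (bl0l hp) (bl0l hs) addr0.
- move=> u v w; rewrite /symp /sdprod /=.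
  rewrite !(pairingDr, pairingDl, pairing_Rstar hp, pairing_Lstar hs); ring.
Qed.
End Forward.

Section Backward.
Variables (K : fieldType) (n : nat).
Variable p : dbl K n -> dbl K n -> dbl K n.
Hypothesis Hdc : double_construction p.
Hypothesis Hid : dual_is_ideal p.

Let hb : bilinear_dbl p. Proof. by case: Hdc. Qed.
Let ha : antiassociative_dbl p. Proof. by case: Hdc. Qed.
Let hA : forall x y : vec K n, (p (inA x) (inA y)).2 = 0. Proof. by case: Hdc. Qed.
Let hAd : forall a b : vec K n, (p (inAd a) (inAd b)).1 = 0. Proof. by case: Hdc. Qed.
Let hcyc : forall u v w : dbl K n,
         symp (p u v) w + symp (p v w) u + symp (p w u) v = 0.
Proof. by case: Hdc. Qed.

Lemma dscale1 (u : dbl K n) : dscale 1 u = u.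
Proof. by case: u => x a; rewrite /dscale /= !scale1r. Qed.

Lemma pDl u v w : p (dadd u v) w = dadd (p u w) (p v w).
Proof. by have := (hb 1 u v w).1; rewrite !dscale1. Qed.
Lemma pDr u v w : p w (dadd u v) = dadd (p w u) (p w v).
Proof. by have := (hb 1 u v w).2; rewrite !dscale1. Qed.

Lemma inA_lin k (x y : vec K n) : inA (k *: x + y) = dadd (dscale k (inA x)) (inA y).
Proof. by rewrite /inA /dadd /dscale /= scaler0 addr0. Qed.
Lemma inAd_lin k (x y : vec K n) : inAd (k *: x + y) = dadd (dscale k (inAd x)) (inAd y).
Proof. by rewrite /inAd /dadd /dscale /= scaler0 addr0. Qed.
Lemma decomp (x a : vec K n) : (x, a) = dadd (inA x) (inAd a).
Proof. by rewrite /dadd /inA /inAd /= addr0 add0r. Qed.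

Lemma F2 a b : (p (inAd a) (inAd b)).2 = 0.
Proof.
apply: row_ext_l => t; rewrite pairing0r.
have := hcyc (inAd a) (inAd b) (inA t); rewrite /symp.
rewrite (Hid (inA t) a).1 (Hid (inA t) b).2 /inA /inAd /=.
by rewrite !pairing0l !pairing0r !oppr0 !add0r !addr0.
Qed.

Definition prec2 (x y : vec K n) : vec K n :=
  \row_i pairing x (p (inA y) (inAd (ev K i))).2.
Definition succ2 (x y : vec K n) : vec K n :=
  \row_i pairing y (p (inAd (ev K i)) (inA x)).2.

Lemma P1 x y c : pairing (prec2 x y) c = pairing x (p (inA y) (inAd c)).2.
Proof.
rewrite pairingC.
have := lin_expand (f := fun c => pairing x (p (inA y) (inAd c)).2) _ c.
move=> -> // k a b; rewrite inAd_lin (hb k _ _ _).2 /=.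
by rewrite pairingDr pairingZr.
Qed.
Lemma P2 x y c : pairing (succ2 x y) c = pairing y (p (inAd c) (inA x)).2.
Proof.
rewrite pairingC.
have := lin_expand (f := fun c => pairing y (p (inAd c) (inA x)).2) _ c.
move=> -> // k a b; rewrite inAd_lin (hb k _ _ _).1 /=.
by rewrite pairingDr pairingZr.
Qed.

Lemma P3 x y : (p (inA x) (inA y)).1 = prec2 x y + succ2 x y.
Proof.
apply: row_ext => c; rewrite pairingDl P1 P2.
have := hcyc (inA x) (inA y) (inAd c); rewrite /symp.
rewrite /inA /inAd /= !pairing0l !pairing0r !oppr0 !addr0 => H.
by apply/eqP; rewrite -subr_eq0; apply/eqP; rewrite -oppr0 -H; ring.
Qed.

Lemma hprec : bilinear_vec prec2.
Proof.
move=> k x y z; split; apply: row_ext => c.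
  by rewrite pairingDl pairingZl !P1 pairingDl pairingZl.
rewrite pairingDl pairingZl !P1 inA_lin (hb _ _ _ _).1 /=.
by rewrite pairingDr pairingZr.
Qed.
Lemma hsucc : bilinear_vec succ2.
Proof.
move=> k x y z; split; apply: row_ext => c.
  rewrite pairingDl pairingZl !P2 inA_lin (hb _ _ _ _).2 /=.
  by rewrite pairingDr pairingZr.
by rewrite pairingDl pairingZl !P2 pairingDl pairingZl.
Qed.

Lemma pE u v : p u v = sdprod prec2 succ2 u v.
Proof.
case: u => x a; case: v => y b.
rewrite [p _ _](_ : _ = p (dadd (inA x) (inAd a)) (dadd (inA y) (inAd b))); last first.
  by rewrite -!decomp.
rewrite pDl !pDr /dadd /sdprod /=.
rewrite P3 hA hAd F2 (Hid (inA x) b).1 (Hid (inA y) a).2 !addr0 !add0r.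
congr pair; congr (_ + _); apply: row_ext_l => t.
  by rewrite (pairing_Rstar hprec) P1.
by rewrite (pairing_Lstar hsucc) P2.
Qed.

End Backward.

Section Ids.
Variables (K : fieldType) (n : nat).
Variables prec succ : vec K n -> vec K n -> vec K n.
Hypothesis hp : bilinear_vec prec.
Hypothesis hs : bilinear_vec succ.
Hypothesis hass : antiassociative_dbl (sdprod prec succ).

Ltac zs := rewrite /sdprod /dopp /inA /inAd /=;
  rewrite ?(Rstar0r, Lstar0r, Rstar0l hp, Lstar0l hs, bl0l hp, bl0r hp,
            bl0l hs, bl0r hs, addr0, add0r, oppr0).

Lemma I1 x y z : prec (prec x y) z = - prec x (prec y z + succ y z).
Proof.
apply: row_ext => c.
have := congr1 snd (hass (inA y) (inA z) (inAd c)); zs => E.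
rewrite pairingNl -!(pairing_Rstar hp) E pairingNr.
by rewrite opprK.
Qed.

Lemma I2 x y z : prec (succ x y) z = - succ x (prec y z).
Proof.
apply: row_ext => c.
have := congr1 snd (hass (inA z) (inAd c) (inA x)); zs => E.
rewrite pairingNl -(pairing_Rstar hp) -(pairing_Lstar hs).
rewrite -(pairing_Lstar hs) -(pairing_Rstar hp) E pairingNr.
by [].
Qed.

Lemma I3 x y z : succ x (succ y z) = - succ (prec x y + succ x y) z.
Proof.
apply: row_ext => c.
have := congr1 snd (hass (inAd c) (inA x) (inA y)); zs => E.
rewrite pairingNl -!(pairing_Lstar hs) E pairingNr.
by [].
Qed.
End Ids.

Theorem mainTheorem15 (K : fieldType) (n : nat) :
  (forall prec succ : vec K n -> vec K n -> vec K n,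
     antidendriform prec succ -> double_construction (sdprod prec succ))
  /\
  (forall p : dbl K n -> dbl K n -> dbl K n,
     double_construction p -> dual_is_ideal p ->
     (forall a b : vec K n, p (inAd a) (inAd b) = (0, 0))
     /\
     exists prec succ : vec K n -> vec K n -> vec K n,
       (forall (x y : vec K n) (w : dbl K n),
          symp (inA (succ x y)) w = symp (inA y) (p w (inA x)) /\
          symp (inA (prec x y)) w = symp (inA x) (p (inA y) w))
       /\ antidendriform prec succ
       /\ exists phi : dbl K n -> dbl K n,
            dc_isomorphism p (sdprod prec succ) phi).
Proof.
split.
  move=> prec succ [hp [hs H]]; move: H => /= [A1 [A2 A3]].
  exact: forward.
move=> p Hdc Hid; split.
  move=> a b; rewrite [LHS]surjective_pairing.
  by rewrite (F2 Hdc Hid); case: Hdc => _ _ _ -> _.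
have hA : forall x y : vec K n, (p (inA x) (inA y)).2 = 0 by case: Hdc.
exists (prec2 p), (succ2 p); split.
  move=> x y [w1 c]; rewrite (decomp w1 c) (pDl Hdc) (pDr Hdc) /symp /dadd /=.
  rewrite !hA add0r addr0 (P1 Hdc) (P2 Hdc).
  by rewrite !pairing0r !add0r.
have hass : antiassociative_dbl (sdprod (prec2 p) (succ2 p)).
  move=> u v w; rewrite -!pE //; by case: Hdc.
have hp := hprec Hdc.
have hs := hsucc Hdc.
split.
  split=> //; split=> //=; split; [|split].
  - exact: I1.
  - exact: I2.
  - exact: I3.
exists id; split.
- split=> //; by exists id.
- by move=> u v; rewrite pE.
- by split=> x; exists x.
- by split=> x; exists x.
- by [].
Qed.
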